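(* Let $X$ and $Y$ be discrete random variables on finite alphabets $\mathcal{X}$ and $\mathcal{Y}$ with joint distribution $P_{XY}$ and marginal $q_Y$. Define, for $\varepsilon\in[\mathsf{P}_{\mathsf{c}}(X),\mathsf{P}_{\mathsf{c}}(X|Y)]$, $$\underline{\mathcal{h}}(\varepsilon)=\sup\{\mathsf{P}_{\mathsf{c}}(Y|Z): P_{Z|Y},\ \mathcal{Z}=\mathcal{Y},\ X - Y - Z,\ \mathsf{P}_{\mathsf{c}}(X|Z)\le\varepsilon\}.$$ If $\mathsf{P}_{\mathsf{c}}(X)<\mathsf{P}_{\mathsf{c}}(X|Y)$, then there exists $\varepsilon_{\mathsf L}\in(\mathsf{P}_{\mathsf{c}}(X),\mathsf{P}_{\mathsf{c}}(X|Y))$ such that $\underline{\mathcal{h}}$ is linear on $[\varepsilon_{\mathsf L},\mathsf{P}_{\mathsf{c}}(X|Y)]$; in particular, for every $\varepsilon\in[\varepsilon_{\mathsf L},\mathsf{P}_{\mathsf{c}}(X|Y)]$, $$\underline{\mathcal{h}}(\varepsilon)=1-(\mathsf{P}_{\mathsf{c}}(X|Y)-\varepsilon)\,\underline{\mathcal{h}}'(\mathsf{P}_{\mathsf{c}}(X|Y)),$$ where $\underline{\mathcal{h}}'(\mathsf{P}_{\mathsf{c}}(X|Y))$ denotes the left derivative of $\underline{\mathcal{h}}$ at $\mathsf{P}_{\mathsf{c}}(X|Y)$. Moreover, if $q_Y(y)>0$ for all $y\in\mathcal{Y}$ and for each $y\in\mathcal{Y}$ there exists a (unique) $x_y\in\mathcal{X}$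 with $P_{X|Y}(x_y|y)>P_{X|Y}(x|y)$ for all $x\ne x_y$, then $$\underline{\mathcal{h}}'(\mathsf{P}_{\mathsf{c}}(X|Y))=\min_{(y,z)\in\mathcal{Y}\times\mathcal{Y}}\frac{q_Y(y)}{P_{XY}(x_y,y)-P_{XY}(x_z,y)},$$ with the convention $\frac{x}{0}=+\infty$ for $x>0$. In addition, if $(y_0,z_0)\in\mathcal{Y}\times\mathcal{Y}$ attains this minimum, then there exists $\varepsilon_{\mathsf L}^{y_0,z_0}<\mathsf{P}_{\mathsf{c}}(X|Y)$ such that the $N$-ary Z-channel $\mathsf{Z}^{y_0,z_0}(\zeta^{y_0,z_0}(\varepsilon))$ achieves $\underline{\mathcal{h}}(\varepsilon)$ for every $\varepsilon\in[\varepsilon_{\mathsf L}^{y_0,z_0},\mathsf{P}_{\mathsf{c}}(X|Y)]$, where $$\zeta^{y_0,z_0}(\varepsilon)=\frac{\mathsf{P}_{\mathsf{c}}(X|Y)-\varepsilon}{P_{XY}(x_{y_0},y_0)-P_{XY}(x_{z_0},y_0)}.$$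
   Context: $\mathsf{P}_{\mathsf{c}}(X)=\max_xP_X(x)$ and $\mathsf{P}_{\mathsf{c}}(X|Z)=\sum_z\max_xP_{XZ}(x,z)$. In the definition of $\underline{\mathcal{h}}$, the channel $P_{Z|Y}$ has output alphabet equal to $\mathcal{Y}$ and $X - Y - Z$ is a Markov chain. For $(y_0,z_0)\in\mathcal{Y}\times\mathcal{Y}$ and $\gamma\in[0,1]$, the $N$-ary Z-channel $\mathsf{Z}^{y_0,z_0}(\gamma)$ (with $N=|\mathcal{Y}|$) is the channel $\mathsf{W}$ with input and output alphabet $\mathcal{Y}$ given by $\mathsf{W}(y|y)=1$ for $y\ne y_0$, $\mathsf{W}(z_0|y_0)=\gamma$, $\mathsf{W}(y_0|y_0)=1-\gamma$. ''Achieves $\underline{\mathcal{h}}(\varepsilon)$'' means it satisfies the constraint $\mathsf{P}_{\mathsf{c}}(X|Z)\le\varepsilon$ and attains $\mathsf{P}_{\mathsf{c}}(Y|Z)=\underline{\mathcal{h}}(\varepsilon)$. *)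

(* Defs.v *)
From HB Require Import structures.
From mathcomp Require Import all_boot all_order all_algebra.
From mathcomp Require Import all_classical all_reals.
From mathcomp Require Import topology normedtype.
Set Implicit Arguments. Unset Strict Implicit. Unset Printing Implicit Defensive.
Import Order.TTheory GRing.Theory Num.Theory.
Import numFieldNormedType.Exports.
Local Open Scope classical_set_scope.
Local Open Scope ring_scope.

Section Defs.
Variables (R : realType) (X Y : finType).

Definition is_joint (P : X -> Y -> R) :=
  (forall x y, 0 <= P x y) /\ \sum_(x : X) \sum_(y : Y) P x y = 1.

Definition qY (P : X -> Y -> R) (y : Y) : R := \sum_(x : X) P x y.

Definition condXY (P : X -> Y -> R) (x : X) (y : Y) : R := P x y / qY P y.

Definition PcX (P : X -> Y -> R) : R :=
  \big[Num.max/0]_(x : X) \sum_(y : Y) P x y.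

Definition PcXgY (P : X -> Y -> R) : R :=
  \sum_(y : Y) \big[Num.max/0]_(x : X) P x y.

(* a channel P_{Z|Y} with output alphabet Z = Y; W y z = P_{Z|Y}(z|y) *)
Definition is_channel (W : Y -> Y -> R) :=
  (forall y z, 0 <= W y z) /\ (forall y, \sum_(z : Y) W y z = 1).

(* X - Y - Z Markov chain: P_{XZ}(x,z) = sum_y P_XY(x,y) W(z|y) *)
Definition PcXgZ (P : X -> Y -> R) (W : Y -> Y -> R) : R :=
  \sum_(z : Y) \big[Num.max/0]_(x : X) (\sum_(y : Y) P x y * W y z).

Definition PcYgZ (P : X -> Y -> R) (W : Y -> Y -> R) : R :=
  \sum_(z : Y) \big[Num.max/0]_(y : Y) (qY P y * W y z).

Definition hlow (P : X -> Y -> R) (eps : R) : R :=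
  sup [set PcYgZ P W | W in [set W | is_channel W /\ PcXgZ P W <= eps]].

Definition zchannel (y0 z0 : Y) (g : R) : Y -> Y -> R :=
  fun y z => if y == y0 then
               (if z == z0 then g else if z == y0 then 1 - g else 0)
             else (if z == y then 1 else 0).

Definition achieves (P : X -> Y -> R) (W : Y -> Y -> R) (eps : R) :=
  is_channel W /\ PcXgZ P W <= eps /\ PcYgZ P W = hlow P eps.

Definition pc_ratio (P : X -> Y -> R) (xs : Y -> X) (p : Y * Y) : \bar R :=
  let d := P (xs p.1) p.1 - P (xs p.2) p.1 in
  if d == 0 then +oo%E else (qY P p.1 / d)%:E.

Definition min_pc_ratio (P : X -> Y -> R) (xs : Y -> X) : \bar R :=
  \big[Order.min/+oo%E]_(p : Y * Y) pc_ratio P xs p.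

Definition zeta_yz (P : X -> Y -> R) (xs : Y -> X) (y0 z0 : Y) (eps : R) : R :=
  (PcXgY P - eps) / (P (xs y0) y0 - P (xs z0) y0).

End Defs.

Definition left_dq (R : realType) (f : R -> R) (b : R) : R -> R :=
  fun e => (f b - f e) / (b - e).
Definition left_deriv (R : realType) (f : R -> R) (b : R) : R :=
  lim (left_dq f b @ b^'-).

(* Main.v *)
Require Import Defs.
From HB Require Import structures.
From mathcomp Require Import all_boot all_order all_algebra.
From mathcomp Require Import all_classical all_reals.
From mathcomp Require Import topology normedtype.
From mathcomp Require Import derive.
From mathcomp Require Import ring lra.
Import Order.TTheory GRing.Theory Num.Theory.
Import numFieldNormedType.Exports.
Local Open Scope classical_set_scope.
Local Open Scope ring_scope.

Set Implicit Arguments. Unset Strict Implicit. Unset Printing Implicit Defensive.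

Section Basics.
Variables (R : realType) (X Y : finType) (P : X -> Y -> R).
Hypothesis HP : is_joint P.

Let q := qY P.
Definition Pst (y : Y) : R := \big[Num.max/0]_(x : X) P x y.

Lemma P_ge0 x y : 0 <= P x y.
Proof. by case: HP. Qed.

Lemma q_ge0 y : 0 <= qY P y.
Proof. by apply: sumr_ge0 => x _; exact: P_ge0. Qed.

Lemma P_le_q x y : P x y <= qY P y.
Proof.
rewrite /qY (bigD1 x) //= lerDl; apply: sumr_ge0 => i _; exact: P_ge0.
Qed.

Lemma sum_q : \sum_y qY P y = 1.
Proof. by case: HP => _ <-; rewrite /qY exchange_big. Qed.

Lemma P_le_Pst x y : P x y <= Pst y.
Proof. exact: (le_bigmax 0 (fun x => P x y) x). Qed.


Lemma X_inhab : exists x : X, True.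
Proof.
case: HP => _ H; case: (pickP (@predT X)) => [x _|H0]; first by exists x.
by move: H; rewrite big_pred0 // => /eqP; rewrite eq_sym oner_eq0.
Qed.

Lemma Y_inhab : exists y : Y, True.
Proof.
case: X_inhab => x _; case: HP => _ H; case: (pickP (@predT Y)) => [y _|H0]; first by exists y.
move: H; rewrite (eq_bigr (fun=> 0)); first by rewrite big1_eq => /eqP; rewrite eq_sym oner_eq0.
by move=> x' _; exact: big_pred0.
Qed.

Lemma Pst_ge0 y : 0 <= Pst y.
Proof. by case: X_inhab => x _; exact: le_trans (P_ge0 x y) (P_le_Pst x y). Qed.

Lemma Pst_le_q y : Pst y <= qY P y.
Proof. by apply: bigmax_le => [|x _]; [exact: q_ge0|exact: P_le_q]. Qed.

Lemma q0_P x y : qY P y = 0 -> P x y = 0.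
Proof. by move=> h; apply/eqP; rewrite eq_le P_ge0 andbT -h P_le_q. Qed.

Lemma q0_Pst y : qY P y = 0 -> Pst y = 0.
Proof. by move=> h; apply/eqP; rewrite eq_le Pst_ge0 andbT -h Pst_le_q. Qed.

Lemma argmax_ex : exists xs : Y -> X, forall y, P (xs y) y = Pst y.
Proof.
case: X_inhab => x0 _.
exists (fun y => [arg max_(x > x0) P x y]%O) => y.
by rewrite /Pst (bigmax_eq_arg 0 x0 predT) // => i _; exact: P_ge0.
Qed.

Lemma PcXgY_Pst : PcXgY P = \sum_y Pst y.
Proof. by []. Qed.

Lemma PX_le_PcX x : \sum_y P x y <= PcX P.
Proof. exact: (le_bigmax 0 (fun x => \sum_y P x y) x). Qed.


Definition mW (z0 : Y) (v : Y -> R) : Y -> Y -> R :=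
  fun y z => (y == z)%:R * (1 - v y) + (z == z0)%:R * v y.

Lemma sum_ind (z : Y) : \sum_y (y == z)%:R = 1 :> R.
Proof.
by rewrite (bigD1 z) //= eqxx big1 ?addr0 // => y /negbTE ->.
Qed.

Lemma sum_indl (z : Y) : \sum_y (z == y)%:R = 1 :> R.
Proof. by under eq_bigr do rewrite eq_sym; exact: sum_ind. Qed.

Lemma sum_delta (f : Y -> R) z : \sum_y f y * (y == z)%:R = f z.
Proof.
rewrite (bigD1 z) //= eqxx mulr1 big1 ?addr0 // => y /negbTE ->.
by rewrite mulr0.
Qed.

Lemma sum_mW (f : Y -> R) z0 v z :
  \sum_y f y * mW z0 v y z = f z * (1 - v z) + (z == z0)%:R * \sum_y f y * v y.
Proof.
rewrite /mW; under eq_bigr do rewrite mulrDr; rewrite big_split /=; congr (_ + _).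
  rewrite -(sum_delta (fun y => f y * (1 - v y)) z); apply: eq_bigr => y _.
  by rewrite -mulrA [(y == z)%:R * _]mulrC.
by rewrite mulr_sumr; apply: eq_bigr => y _; rewrite mulrCA.
Qed.

Lemma mW_channel z0 v : (forall y, 0 <= v y <= 1) -> is_channel (mW z0 v).
Proof.
move=> hv; split.
  move=> y z; have /andP[h1 h2] := hv y; rewrite /mW addr_ge0 // mulr_ge0 //.
  by rewrite subr_ge0.
move=> y; rewrite /mW big_split /= -!mulr_suml sum_indl sum_ind !mul1r.
by rewrite subrK.
Qed.

Lemma merge_PcX z0 v D : (forall y, 0 <= v y <= 1) -> v z0 = 0 ->
  (forall x, P x z0 + \sum_y v y * P x y <= Pst z0 + \sum_y v y * Pst y - D) ->
  PcXgZ P (mW z0 v) <= PcXgY P - D.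
Proof.
move=> hv vz0 hD; rewrite /PcXgZ.
apply: (@le_trans _ _ (\sum_z ((1 - v z) * Pst z + (z == z0)%:R * (\sum_y v y * Pst y - D)))).
  apply: ler_sum => z _; apply: bigmax_le.
    have [->|nz] := eqVneq z z0.
      rewrite vz0 subr0 /= mulr1n !mul1r addrA.
      case: X_inhab => x _; apply: le_trans (hD x); apply: addr_ge0; first exact: P_ge0.
      apply: sumr_ge0 => y _; have /andP[h1 _] := hv y; exact: mulr_ge0 (P_ge0 _ _).
    rewrite /= mulr0n mul0r addr0 mulr_ge0 ?Pst_ge0 //.
    by have /andP[_ h] := hv z; rewrite subr_ge0.
  move=> x _; rewrite (sum_mW (fun y => P x y)).
  have [->|nz] := eqVneq z z0.
    rewrite /= mulr1n !mul1r vz0 subr0 mulr1 addrA.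
    rewrite mul1r; apply: le_trans (hD x); rewrite lerD2l.
    by under eq_bigr do rewrite mulrC.
  rewrite /= !mulr0n !mul0r !addr0 mulrC ler_wpM2l ?P_le_Pst //.
  by have /andP[_ h] := hv z; rewrite subr_ge0.
rewrite big_split /= -mulr_suml sum_ind mul1r.
under eq_bigr do rewrite mulrBl mul1r.
rewrite sumrB /PcXgY -/(Pst _).
have -> : \sum_z v z * Pst z = \sum_y v y * Pst y by [].
by rewrite addrA subrK.
Qed.

Lemma merge_PcY z0 v : v z0 = 0 ->
  1 - \sum_y qY P y * v y <= PcYgZ P (mW z0 v).
Proof.
move=> vz0; rewrite /PcYgZ.
apply: (@le_trans _ _ (\sum_z qY P z * mW z0 v z z)); last first.
  apply: ler_sum => z _; exact: (le_bigmax 0 (fun y => qY P y * mW z0 v y z) z).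
have -> : \sum_z qY P z * mW z0 v z z = \sum_z (qY P z - qY P z * v z).
  apply: eq_bigr => z _; rewrite /mW eqxx mul1r.
  have [->|nz] := eqVneq z z0; first by rewrite vz0 !mulr0 !subr0 addr0 mulr1.
  by rewrite /= mulr0n mul0r addr0 mulrBr mulr1.
by rewrite sumrB sum_q.
Qed.

Lemma upper k : 0 <= k ->
  (forall ys (w : Y -> R), (forall y, 0 <= w y) ->
     (forall y, qY P y * w y <= qY P ys * w ys) ->
     exists x, k * \sum_y (Pst y - P x y) * w y <=
               \sum_y qY P y * w y - qY P ys * w ys) ->
  forall W, is_channel W -> k * (PcXgY P - PcXgZ P W) <= 1 - PcYgZ P W.
Proof.
move=> k0 H W [W0 W1].
have E1 : PcXgY P = \sum_z \sum_y Pst y * W y z.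
  rewrite exchange_big; apply: eq_bigr => y _; by rewrite -mulr_sumr W1 mulr1.
have E2 : 1 = \sum_z \sum_y qY P y * W y z.
  rewrite exchange_big -sum_q; apply: eq_bigr => y _; by rewrite -mulr_sumr W1 mulr1.
rewrite E1 {1}E2 /PcXgZ /PcYgZ -!sumrB mulr_sumr; apply: ler_sum => z _.
case: Y_inhab => y0 _.
set ys := [arg max_(y > y0) qY P y * W y z]%O.
have Heq : \big[Num.max/0]_y (qY P y * W y z) = qY P ys * W ys z.
  by rewrite (bigmax_eq_arg 0 y0 predT) // => i _; rewrite mulr_ge0 ?q_ge0.
have Hle : forall y, qY P y * W y z <= qY P ys * W ys z.
  by move=> y; rewrite -Heq; exact: (le_bigmax 0 (fun y => qY P y * W y z) y).
case: (H ys (fun y => W y z) (fun y => W0 y z) Hle) => x Hx.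
rewrite Heq; apply: le_trans Hx; rewrite ler_wpM2l //.
have -> : \sum_y (Pst y - P x y) * W y z = \sum_y Pst y * W y z - \sum_y P x y * W y z.
  by rewrite -sumrB; apply: eq_bigr => y _; rewrite mulrBl.
rewrite lerB //; exact: (le_bigmax 0 (fun x => \sum_y P x y * W y z) x).
Qed.

Lemma gen k t0 : 0 <= k ->
  (forall W, is_channel W -> k * (PcXgY P - PcXgZ P W) <= 1 - PcYgZ P W) ->
  (forall d, 0 <= d <= t0 -> exists W, is_channel W /\
       PcXgZ P W <= PcXgY P - d /\ 1 - k * d <= PcYgZ P W) ->
  forall eps, PcXgY P - t0 <= eps <= PcXgY P ->
    hlow P eps = 1 - k * (PcXgY P - eps) /\
    (forall W, is_channel W -> PcXgZ P W <= eps ->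
       1 - k * (PcXgY P - eps) <= PcYgZ P W -> PcYgZ P W = hlow P eps).
Proof.
move=> k0 U L eps /andP[e1 e2].
set S := [set PcYgZ P W | W in [set W | is_channel W /\ PcXgZ P W <= eps]].
have ub : ubound S (1 - k * (PcXgY P - eps)).
  move=> _ [W' [W'c W'X] <-]; have := U W' W'c.
  have : k * (PcXgY P - eps) <= k * (PcXgY P - PcXgZ P W').
    by rewrite ler_wpM2l // lerB.
  move=> h1 h2; rewrite lerBrDl -lerBrDr; exact: le_trans h1 h2.
have [W [Wc [WX WY]]] : exists W, is_channel W /\
       PcXgZ P W <= PcXgY P - (PcXgY P - eps) /\ 1 - k * (PcXgY P - eps) <= PcYgZ P W.
  by apply: L; rewrite subr_ge0 e2 /= lerBlDr -lerBlDl.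
rewrite opprB addrC subrK in WX.
have inS : S (PcYgZ P W) by exists W.
have hs : hlow P eps = 1 - k * (PcXgY P - eps).
  rewrite /hlow -/S; apply/le_anti/andP; split; first by apply: ge_sup => //; exists (PcYgZ P W).
  apply: le_trans WY _; apply: sup_upper_bound => //; split; first by exists (PcYgZ P W).
  by exists (1 - k * (PcXgY P - eps)).
split=> // W' W'c W'X W'Y; rewrite hs; apply/le_anti/andP; split=> //.
by apply: ub; exists W'.
Qed.

End Basics.

Lemma der (R : realType) (f : R -> R) b k t0 : 0 < t0 ->
  (forall e, b - t0 <= e <= b -> f e = 1 - k * (b - e)) ->
  left_dq f b @ b^'- --> k /\ left_deriv f b = k.
Proof.
move=> t0p H.
have hc : left_dq f b @ b^'- --> k.
  apply: cvg_near_cst; near=> e.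
  have e1 : b - t0 <= e by near: e; apply: nbhs_left_ge; rewrite ltrBlDr ltrDl.
  have e2 : e < b by near: e; exact: nbhs_left_lt.
  rewrite /left_dq !H ?e1 ?(ltW e2) ?lexx ?andbT ?gerBl ?ltW //.
  rewrite subrr mulr0 subr0 opprB addrC subrK mulfK //.
  by rewrite subr_eq0 gt_eqF.
split=> //; exact: cvg_lim.
Unshelve. all: by end_near.
Qed.

Section Part2.
Variables (R : realType) (X Y : finType) (P : X -> Y -> R).
Hypothesis HP : is_joint P.
Hypothesis hlt : PcX P < PcXgY P.
Variable xs : Y -> X.
Hypothesis Hq : forall y, 0 < qY P y.
Hypothesis Hs : forall y x, x != xs y -> condXY P x y < condXY P (xs y) y.

Lemma Pxs y x : x != xs y -> P x y < P (xs y) y.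
Proof.
by move=> /Hs; rewrite /condXY ltr_pM2r // invr_gt0.
Qed.

Lemma Pst_xs y : Pst P y = P (xs y) y.
Proof.
apply/le_anti/andP; split; last exact: P_le_Pst.
apply: bigmax_le => [|x _]; first exact: P_ge0.
by have [->//|/Pxs/ltW] := eqVneq x (xs y).
Qed.

Definition dd (y z : Y) := P (xs y) y - P (xs z) y.

Lemma dd_ge0 y z : 0 <= dd y z.
Proof. by rewrite /dd subr_ge0 -Pst_xs P_le_Pst. Qed.

Let mpr := min_pc_ratio P xs.

Lemma mpr_le p : (mpr <= pc_ratio P xs p)%E.
Proof. exact: bigmin_le. Qed.

Lemma mpr_ex : exists p, mpr = pc_ratio P xs p.
Proof.
case: (Y_inhab HP) => y0 _.
have [i0 _ h] := @eq_bigmin _ _ _ +oo%E (y0, y0) predT (pc_ratio P xs) isT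
  (fun _ _ => leey _).
by exists i0.
Qed.

Lemma dd_ex : exists y, exists z, dd y z != 0.
Proof.
apply/not_existsP => H.
have H' : forall y z, dd y z = 0.
  move=> y z; apply/eqP; apply/negPn/negP => hn.
  by apply: (H y); exists z.
case: (Y_inhab HP) => z0 _.
have : PcXgY P <= PcX P.
  apply: le_trans (PX_le_PcX P (xs z0)).
  rewrite /PcXgY le_eqVlt; apply/orP; left; apply/eqP; apply: eq_bigr => y _.
  by rewrite -/(Pst P y) Pst_xs; apply/eqP; rewrite -subr_eq0; apply/eqP; exact: H'.
by rewrite leNgt hlt.
Qed.

Lemma pc_ratioE y z : pc_ratio P xs (y, z) =
  if dd y z == 0 then +oo%E else (qY P y / dd y z)%:E.
Proof. by []. Qed.

Lemma mpr_fin y0 z0 : pc_ratio P xs (y0, z0) = mpr ->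
  [/\ 0 < dd y0 z0, y0 != z0 & mpr = (qY P y0 / dd y0 z0)%:E].
Proof.
move=> hp.
have [y1 [z1 h1]] := dd_ex.
have : (mpr < +oo)%E.
  apply: le_lt_trans (mpr_le (y1, z1)) _.
  by rewrite pc_ratioE (negbTE h1) ltry.
rewrite -hp pc_ratioE; case: eqP => // /eqP hd _.
split => //; first by rewrite lt_def hd dd_ge0.
by apply: contraNneq hd => ->; rewrite /dd subrr.
Qed.

Section Pair.
Variables y0 z0 : Y.
Hypothesis hmin : pc_ratio P xs (y0, z0) = mpr.
Let d0 := dd y0 z0.
Let m := qY P y0 / d0.

Lemma d0_gt0 : 0 < d0. Proof. by case: (mpr_fin hmin). Qed.
Lemma yz_neq : y0 != z0. Proof. by case: (mpr_fin hmin). Qed.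
Lemma mprE : mpr = m%:E. Proof. by case: (mpr_fin hmin). Qed.
Lemma m_ge0 : 0 <= m.
Proof. by rewrite divr_ge0 ?q_ge0 // ltW // d0_gt0. Qed.

Lemma m_le y z : m * (Pst P y - P (xs z) y) <= qY P y.
Proof.
rewrite Pst_xs -/(dd y z).
have [h0|hn] := eqVneq (dd y z) 0; first by rewrite h0 mulr0 q_ge0.
have := mpr_le (y, z); rewrite mprE pc_ratioE (negbTE hn) lee_fin.
have dp : 0 < dd y z by rewrite lt_def hn dd_ge0.
by rewrite ler_pdivlMr.
Qed.

Lemma upper2 : forall W, is_channel W -> m * (PcXgY P - PcXgZ P W) <= 1 - PcYgZ P W.
Proof.
apply: (upper HP m_ge0) => ys w w0 _; exists (xs ys).
rewrite (bigD1 ys) //= [X in _ <= X - _](bigD1 ys) //= Pst_xs subrr mul0r add0r.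
rewrite addrC addrK mulr_sumr; apply: ler_sum => y _.
by rewrite mulrA ler_wpM2r // m_le.
Qed.

Let gmin := \big[Num.min/1]_(x | x != xs z0) (P (xs z0) z0 - P x z0).

Lemma gmin_gt0 : 0 < gmin.
Proof.
apply: lt_bigmin => // x hx; by rewrite subr_gt0 Pxs.
Qed.

Lemma gmin_le x : x != xs z0 -> gmin <= P (xs z0) z0 - P x z0.
Proof. by move=> hx; exact: bigmin_le_cond. Qed.

Definition t2 := d0 * Num.min 1 (gmin / (qY P y0 + 1)).

Lemma t2_gt0 : 0 < t2.
Proof.
rewrite mulr_gt0 ?d0_gt0 // lt_min ltr01 /= divr_gt0 ?gmin_gt0 //.
by rewrite ltr_wpDl ?q_ge0.
Qed.

Lemma zch_mW (g : R) : zchannel y0 z0 g = mW z0 (fun y => if y == y0 then g else 0).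
Proof.
apply/funext => y; apply/funext => z; rewrite /zchannel /mW.
have [->|ny] := eqVneq y y0.
  have [->|nz] := eqVneq z z0.
    by rewrite (negbTE yz_neq) /= mul0r add0r mul1r.
  case: (eqVneq z y0) => [hz|nz2]; first by rewrite /= mulr1n mul1r mulr0n mul0r addr0.
  by rewrite /= !mulr0n !mul0r addr0.
rewrite subr0 mulr1 mulr0 addr0 eq_sym.
by case: (y == z); rewrite /= ?mulr1n ?mulr0n.
Qed.

Lemma sum_ind0 (F : Y -> R) (g : R) : \sum_y (if y == y0 then g else 0) * F y = g * F y0.
Proof.
rewrite (bigD1 y0) //= eqxx big1 ?addr0 // => y /negbTE ->; exact: mul0r.
Qed.

Lemma lower2 d : 0 <= d <= t2 ->
  is_channel (zchannel y0 z0 (d / d0)) /\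
  PcXgZ P (zchannel y0 z0 (d / d0)) <= PcXgY P - d /\
  1 - m * d <= PcYgZ P (zchannel y0 z0 (d / d0)).
Proof.
move=> /andP[d0' dt].
set g := d / d0.
have dp := d0_gt0.
have g0 : 0 <= g by rewrite divr_ge0 // ltW.
have gle : g <= Num.min 1 (gmin / (qY P y0 + 1)).
  by rewrite /g ler_pdivrMr // mulrC.
have g1 : g <= 1 by apply: le_trans gle _; rewrite ge_min lexx.
have g2 : g * qY P y0 <= gmin.
  have qp : 0 < qY P y0 + 1 by rewrite ltr_wpDl ?q_ge0.
  have : g <= gmin / (qY P y0 + 1) by apply: le_trans gle _; rewrite ge_min lexx orbT.
  rewrite ler_pdivlMr // => h; apply: le_trans h; rewrite ler_wpM2l //.
  by rewrite lerDl.
set v := fun y => if y == y0 then g else 0.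
have hv : forall y, 0 <= v y <= 1.
  by move=> y; rewrite /v; case: (y == y0); rewrite ?lexx ?ler01 ?g0 ?g1.
have vz0 : v z0 = 0 by rewrite /v eq_sym (negbTE yz_neq).
rewrite zch_mW -/v; split; first exact: mW_channel.
split.
  apply: (merge_PcX HP hv vz0) => x.
  rewrite !sum_ind0 !Pst_xs.
  have hd : d = g * d0 by rewrite /g divfK // gt_eqF.
  rewrite hd /d0 /dd.
  have [->|hx] := eqVneq x (xs z0).
    by rewrite le_eqVlt; apply/orP; left; apply/eqP; ring.
  have h1 := gmin_le hx.
  have h2 := P_le_q HP x y0.
  have h3 := P_ge0 HP (xs z0) y0.
  nra.
apply: le_trans (merge_PcY HP vz0).
rewrite (eq_bigr (fun y => v y * qY P y)); last by move=> y _; rewrite mulrC.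
rewrite sum_ind0 /m /g lerB //; rewrite le_eqVlt; apply/orP; left; apply/eqP.
by field; rewrite gt_eqF.
Qed.

End Pair.

End Part2.

Lemma part2 (R : realType) (X Y : finType) (P : X -> Y -> R) :
  is_joint P -> PcX P < PcXgY P ->
  forall xs : Y -> X,
     (forall y, 0 < qY P y) ->
     (forall y x, x != xs y -> condXY P x y < condXY P (xs y) y) ->
     ((left_deriv (hlow P) (PcXgY P))%:E = min_pc_ratio P xs)%E /\
     (forall y0 z0 : Y,
        pc_ratio P xs (y0, z0) = min_pc_ratio P xs ->
        exists epsLyz : R, epsLyz < PcXgY P /\
          forall eps : R, epsLyz <= eps <= PcXgY P ->
            achieves P (zchannel y0 z0 (zeta_yz P xs y0 z0 eps)) eps).
Proof.
move=> HP hlt xs Hq Hs.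
have key : forall y0 z0, pc_ratio P xs (y0, z0) = min_pc_ratio P xs ->
  forall eps, PcXgY P - t2 P xs y0 z0 <= eps <= PcXgY P ->
    hlow P eps = 1 - (qY P y0 / dd P xs y0 z0) * (PcXgY P - eps) /\
    (forall W, is_channel W -> PcXgZ P W <= eps ->
       1 - (qY P y0 / dd P xs y0 z0) * (PcXgY P - eps) <= PcYgZ P W -> PcYgZ P W = hlow P eps).
  move=> y0 z0 hmin; apply: gen.
  - exact: (m_ge0 HP hlt Hq Hs hmin).
  - exact: (upper2 HP hlt Hq Hs hmin).
  - move=> d hd; exists (zchannel y0 z0 (d / dd P xs y0 z0)).
    exact: (lower2 HP hlt Hq Hs hmin hd).
split.
  have [[y0 z0] hp] := mpr_ex HP xs.
  have hmin := esym hp.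
  have [_ ->] := der (t2_gt0 HP hlt Hq Hs hmin) (fun e he => (key y0 z0 hmin e he).1).
  by rewrite -(mprE HP hlt Hq Hs hmin).
move=> y0 z0 hmin; exists (PcXgY P - t2 P xs y0 z0); split.
  by rewrite ltrBlDr ltrDl (t2_gt0 HP hlt Hq Hs hmin).
move=> eps he.
have hd : 0 <= PcXgY P - eps <= t2 P xs y0 z0.
  by case/andP: he => h1 h2; rewrite subr_ge0 h2 /= lerBlDr -lerBlDl.
have [hc [hx hy]] := lower2 HP hlt Hq Hs hmin hd.
have [_ h2] := key y0 z0 hmin eps he.
have hx' : PcXgZ P (zchannel y0 z0 ((PcXgY P - eps) / dd P xs y0 z0)) <= eps.
  by move: hx; rewrite opprB addrCA subrr addr0.
split; first exact: hc.
split; first exact: hx'.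
exact: h2.
Qed.


Module Cpt.
Import ArrowAsProduct.

Section Cont.
Variables (R : realType) (Y : finType).

Lemma cont_sum (I : Type) (r : seq I) (F : I -> (Y -> R) -> R) :
  (forall i, continuous (F i)) -> continuous (fun a => \sum_(i <- r) F i a).
Proof.
move=> hF; elim: r => [|i r IH].
  have -> : (fun a : Y -> R => \sum_(i <- [::]) F i a) = (fun=> 0).
    by apply/funext => a; rewrite big_nil.
  exact: cst_continuous.
have -> : (fun a : Y -> R => \sum_(j <- i :: r) F j a) = (fun a => F i a + \sum_(j <- r) F j a).
  by apply/funext => a; rewrite big_cons.
by move=> a; apply: continuousD; [exact: hF|exact: IH].
Qed.

Lemma cont_lin (c : Y -> R) : continuous (fun a : Y -> R => \sum_y c y * a y).
Proof.
apply: cont_sum => y a; apply: continuousM; first exact: cst_continuous.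
exact: (@proj_continuous Y (fun _ => R) y).
Qed.

Lemma cont_bigmin (I : Type) (r : seq I) (p : pred I) (F : I -> (Y -> R) -> R)
  (g : (Y -> R) -> R) : continuous g -> (forall i, continuous (F i)) ->
  continuous (fun a => \big[Num.min/g a]_(i <- r | p i) F i a).
Proof.
move=> hg hF; elim: r => [|i r IH].
  have -> : (fun a : Y -> R => \big[Num.min/g a]_(i <- [::] | p i) F i a) = g.
    by apply/funext => a; rewrite big_nil.
  exact: hg.
have -> : (fun a : Y -> R => \big[Num.min/g a]_(j <- i :: r | p j) F j a) =
  if p i then (fun a => Num.min (F i a) (\big[Num.min/g a]_(j <- r | p j) F j a))
  else (fun a => \big[Num.min/g a]_(j <- r | p j) F j a).
  by apply/funext => a; rewrite big_cons; case: (p i).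
case: (p i) => //= a; exact: continuous_min (hF i a) (IH a).
Qed.

Lemma box_compact (B : Y -> R) : compact [set a : Y -> R | forall y, `[0, B y]%classic (a y)].
Proof. exact: (@tychonoff Y (fun _ => R) (fun y => `[0, B y]%classic) (fun y => @segment_compact R 0 (B y))). Qed.

Lemma hyper_closed (c : Y -> R) : closed [set a : Y -> R | \sum_y c y * a y = 1].
Proof.
have -> : [set a : Y -> R | \sum_y c y * a y = 1] =
   (fun a => \sum_y c y * a y) @^-1` [set x | x = 1] by [].
apply: closed_comp; last exact: closed_eq.
by move=> a _; exact: cont_lin.
Qed.
End Cont.
Section Cont2.
Variables (R : realType) (Y : finType).
Lemma delta_compact (B c : Y -> R) :
  compact ([set a : Y -> R | forall y, `[0, B y]%classic (a y)] `&`
           [set a : Y -> R | \sum_y c y * a y = 1]).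
Proof. apply: compact_closedI; [exact: box_compact|exact: hyper_closed]. Qed.

Lemma evt (B c : Y -> R) (G : (Y -> R) -> R) : continuous G ->
  let D := [set a : Y -> R | forall y, `[0, B y]%classic (a y)] `&`
           [set a : Y -> R | \sum_y c y * a y = 1] in
  D !=set0 -> exists a, D a /\ forall a', D a' -> G a' <= G a.
Proof.
move=> hG D hD.
have [a aD ha] := compact_EVT_max hD (@delta_compact B c) (continuous_subspaceT hG).
exists a; split; first by rewrite inE in aD.
by move=> a' a'D; apply: ha; rewrite inE.
Qed.
End Cont2.

Section Part1.
Variables (R : realType) (X Y : finType) (P : X -> Y -> R).
Hypothesis HP : is_joint P.
Hypothesis hlt : PcX P < PcXgY P.
Variable xs0 : Y -> X.
Hypothesis hxs0 : forall y, P (xs0 y) y = Pst P y.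

Let q := qY P.
Definition ell x (a : Y -> R) := \sum_y (Pst P y - P x y) * a y.
Definition GG z (a : Y -> R) := \big[Num.min/ell (xs0 z) a]_(x | Pst P z == P x z) ell x a.
Definition BB z y : R := if (y != z) && (0 < qY P y) then (qY P y)^-1 else 0.
Definition ind z y : R := ((y != z) && (0 < qY P y))%:R.
Definition Dl z := [set a : Y -> R | forall y, `[0, BB z y]%classic (a y)] `&`
                   [set a : Y -> R | \sum_y qY P y * a y = 1].

Lemma ell_ind z x a : Pst P z = P x z -> ell x a = \sum_y (Pst P y - P x y) * (ind z y * a y).
Proof.
move=> hx; apply: eq_bigr => y _; rewrite /ind.
have [->|nyz] := eqVneq y z; first by rewrite hx subrr !mul0r.
have [qp|qn] := ltP 0 (qY P y); first by rewrite /= mul1r.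
have q0 : qY P y = 0 by apply/eqP; rewrite eq_le qn q_ge0.
by rewrite (q0_Pst HP q0) (q0_P HP x q0) subrr !mul0r.
Qed.

Lemma ind_ge0 z y : 0 <= ind z y.
Proof. by rewrite /ind ler0n. Qed.

Lemma GG_le z a x : Pst P z = P x z -> GG z a <= ell x a.
Proof. by move=> hx; apply: bigmin_le_cond; apply/eqP. Qed.

Lemma GG_att z a : exists x, Pst P z = P x z /\ ell x a <= GG z a.
Proof.
have := lexx (GG z a); rewrite {2}/GG => /bigmin_leP [h|[x /eqP hx h]].
  by exists (xs0 z); rewrite hxs0.
by exists x.
Qed.

Lemma GG_cont z : continuous (GG z).
Proof.
rewrite /GG; apply: cont_bigmin => [|x]; exact: cont_lin.
Qed.

Lemma sum_P_lt x : \sum_y P x y < PcXgY P.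
Proof. exact: le_lt_trans (PX_le_PcX P x) hlt. Qed.

Lemma good z : 0 < qY P z -> 0 < \sum_y ind z y * qY P y.
Proof.
move=> qz; rewrite lt_def; apply/andP; split; last first.
  by apply: sumr_ge0 => y _; rewrite mulr_ge0 ?ind_ge0 ?q_ge0.
apply/negP => /eqP h0.
have h : forall y, y != z -> qY P y = 0.
  move=> y nyz; have [qp|qn] := ltP 0 (qY P y); last by apply/eqP; rewrite eq_le qn q_ge0.
  have := h0; rewrite (bigD1 y) //= /ind nyz qp /= mul1r => /eqP.
  rewrite paddr_eq0 ?q_ge0 //; last by apply: sumr_ge0 => i _; rewrite mulr_ge0 ?ind_ge0 ?q_ge0.
  by case/andP => /eqP ->.
have : PcXgY P <= \sum_y P (xs0 z) y.
  rewrite /PcXgY (bigD1 z) //= [X in _ <= X](bigD1 z) //= -/(Pst P z) -hxs0 lerD2l.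
  rewrite big1; last by move=> y nyz; apply: q0_Pst; first exact: HP; exact: h.
  by apply: sumr_ge0 => y _; exact: P_ge0.
by rewrite leNgt sum_P_lt.
Qed.

Lemma pos_witness z : 0 < qY P z -> exists a, Dl z a /\ 0 < GG z a.
Proof.
move=> qz; have Qp := good qz; set Qn := \sum_y ind z y * qY P y in Qp.
have ellp : forall x, Pst P z = P x z -> 0 < ell x (fun y => ind z y / Qn).
  move=> x hx.
  have -> : ell x (fun y => ind z y / Qn) = ell x (fun=> Qn^-1).
    by rewrite [RHS](ell_ind _ hx).
  rewrite /ell -mulr_suml sumrB divr_gt0 // subr_gt0.
  exact: sum_P_lt.
exists (fun y => ind z y / Qn); split; first split.
- move=> y /=; rewrite in_itv /=; apply/andP; split.
    by rewrite divr_ge0 ?ind_ge0 ?ltW.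
  rewrite /BB /ind; case h: ((y != z) && (0 < qY P y)); last by rewrite mul0r.
  have qy : 0 < qY P y by case/andP: h.
  rewrite mul1r lef_pV2 ?posrE //.
  rewrite /Qn (bigD1 y) //= /ind h mul1r lerDl; apply: sumr_ge0 => i _.
  by rewrite mulr_ge0 ?ler0n ?q_ge0.
- rewrite /= (eq_bigr (fun y => ind z y * qY P y / Qn)); last first.
    by move=> y _; rewrite mulrA [qY P y * _]mulrC.
  by rewrite -mulr_suml divff // gt_eqF.
rewrite /GG; apply: lt_bigmin; first by apply: ellp; rewrite hxs0.
by move=> x /eqP; exact: ellp.
Qed.

Lemma maxz z : exists a, 0 < qY P z ->
  (Dl z a /\ forall a', Dl z a' -> GG z a' <= GG z a).
Proof.
case: (ltP 0 (qY P z)) => qz; last by exists (fun=> 0).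
have [a [ha1 ha2]] := pos_witness qz.
have [b [hb1 hb2]] := evt (B := BB z) (c := qY P) (@GG_cont z) (ex_intro _ a ha1).
by exists b.
Qed.

Lemma q_pos_ex : exists z, 0 < qY P z.
Proof.
case: (pickP (fun z => 0 < qY P z)) => [z1 qz1|h]; first by exists z1.
have := sum_q HP; rewrite big1 => [/eqP|y _]; first by rewrite eq_sym oner_eq0.
have := h y; rewrite /= => /negbT; rewrite -leNgt => hle.
by apply/eqP; rewrite eq_le hle q_ge0.
Qed.

Lemma best : exists zs a M, [/\ 0 < qY P zs, Dl zs a, M = GG zs a, 0 < M &
   forall z a', 0 < qY P z -> Dl z a' -> GG z a' <= M].
Proof.
case: (choice maxz) => f hf.
have [z1 qz1] := q_pos_ex.
set zs := [arg max_(z > z1 | 0 < qY P z) GG z (f z)]%O.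
have : extremum_spec >=%O (fun z => 0 < qY P z) (fun z => GG z (f z)) zs.
  exact: arg_maxP.
case => zs' qzs hmax.
have [hD hM] := hf zs' qzs.
exists zs', (f zs'), (GG zs' (f zs')); split => //.
  have [a [ha1 ha2]] := pos_witness qzs.
  exact: lt_le_trans ha2 (hM a ha1).
move=> z a' qz ha'; apply: le_trans (hmax z qz).
exact: (hf z qz).2.
Qed.
Lemma upper1 M : 0 < M -> (forall z a', 0 < qY P z -> Dl z a' -> GG z a' <= M) ->
  forall W, is_channel W -> M^-1 * (PcXgY P - PcXgZ P W) <= 1 - PcYgZ P W.
Proof.
move=> Mp hM; apply: (upper HP (k := M^-1)); first by rewrite invr_ge0 ltW.
move=> ys w w0 hown.
have Rnn : \sum_y qY P y * w y - qY P ys * w ys = \sum_(y | y != ys) qY P y * w y.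
  by rewrite (bigD1 ys) //= addrC addrK.
rewrite Rnn.
have Rge : 0 <= \sum_(y | y != ys) qY P y * w y.
  by apply: sumr_ge0 => y _; rewrite mulr_ge0 ?q_ge0.
case: (ltP 0 (qY P ys)) => qys; last first.
  have qys0 : qY P ys = 0 by apply/eqP; rewrite eq_le qys q_ge0.
  exists (xs0 ys); rewrite big1 ?mulr0 // => y _.
  case: (ltP 0 (qY P y)) => qy.
    have : qY P y * w y <= 0 by rewrite -(mul0r (w ys)) -qys0 hown.
    rewrite pmulr_rle0 // => wy; have -> : w y = 0 by apply/eqP; rewrite eq_le wy w0.
    by rewrite mulr0.
  have qy0 : qY P y = 0 by apply/eqP; rewrite eq_le qy q_ge0.
  by rewrite (q0_Pst HP qy0) (q0_P HP _ qy0) subrr mul0r.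
set Qw := \sum_y ind ys y * (qY P y * w y).
have QwE : \sum_(y | y != ys) qY P y * w y = Qw.
  rewrite /Qw [in RHS](bigD1 ys) //= /ind eqxx /= mul0r add0r; apply: eq_bigr => y nyys.
  rewrite nyys /=; case: (ltP 0 (qY P y)) => qy; first by rewrite mul1r.
  have qy0 : qY P y = 0 by apply/eqP; rewrite eq_le qy q_ge0.
  by rewrite qy0 !mul0r.
rewrite QwE; rewrite QwE in Rge.
have indw0 : Qw = 0 -> forall y, ind ys y * w y = 0.
  move=> hQ y; rewrite /ind; case h: ((y != ys) && (0 < qY P y)); last by rewrite mul0r.
  have qy : 0 < qY P y by case/andP: h.
  have : ind ys y * (qY P y * w y) = 0.
    move/eqP: hQ; rewrite psumr_eq0 => [/allP hall|i _]; last first.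
      by rewrite mulr_ge0 ?ind_ge0 ?mulr_ge0 ?q_ge0.
    by apply/eqP; apply: hall; rewrite mem_index_enum.
  by rewrite /ind h mul1r => /eqP; rewrite mulf_eq0 gt_eqF //= mul1r => /eqP.
have [hQ|hQ] := eqVneq Qw 0.
  exists (xs0 ys); rewrite -/(ell (xs0 ys) w) (ell_ind _ (esym (hxs0 ys))).
  by rewrite big1 ?mulr0 ?hQ // => y _; rewrite indw0 // mulr0.
have Qp : 0 < Qw by rewrite lt_def hQ Rge.
set a := fun y => ind ys y * w y / Qw.
have aD : Dl ys a.
  split.
    move=> y /=; rewrite in_itv /=; apply/andP; split.
      by rewrite /a divr_ge0 ?mulr_ge0 ?ind_ge0 // ltW.
    rewrite /a /BB /ind; case h: ((y != ys) && (0 < qY P y)); last by rewrite mul0r mul0r.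
    have qy : 0 < qY P y by case/andP: h.
    rewrite mul1r ler_pdivrMr // mulrC ler_pdivlMr // mulrC.
    rewrite /Qw (bigD1 y) //= /ind h mul1r lerDl; apply: sumr_ge0 => i _.
    by rewrite mulr_ge0 ?ind_ge0 ?mulr_ge0 ?q_ge0.
  rewrite /= /a (eq_bigr (fun y => ind ys y * (qY P y * w y) / Qw)); last first.
    by move=> y _; rewrite !mulrA [qY P y * ind ys y]mulrC.
  by rewrite -mulr_suml divff.
have [x [hx hxa]] := GG_att ys a.
exists x.
have hxM : ell x a <= M := le_trans hxa (hM ys a qys aD).
have -> : \sum_y (Pst P y - P x y) * w y = Qw * ell x a.
  rewrite -/(ell x w) (ell_ind _ hx) /ell mulr_sumr; apply: eq_bigr => y _.
  by rewrite /a; field; rewrite gt_eqF.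
have h : M^-1 * ell x a <= M^-1 * M by rewrite ler_wpM2l // invr_ge0 ltW.
rewrite mulVf ?gt_eqF // in h.
rewrite mulrCA -[X in _ <= X]mulr1 ler_wpM2l //; exact: ltW.
Qed.
Lemma lower1 zs a M : 0 < qY P zs -> Dl zs a -> M = GG zs a -> 0 < M ->
  exists t0, 0 < t0 /\ forall d, 0 <= d <= t0 -> exists W, is_channel W /\
    PcXgZ P W <= PcXgY P - d /\ 1 - M^-1 * d <= PcYgZ P W.
Proof.
move=> qzs [hbox hsum] hMG Mp.
have a0 : forall y, 0 <= a y.
  by move=> y; have := hbox y; rewrite /= in_itv /= => /andP[].
have azs : a zs = 0.
  have := hbox zs; rewrite /= in_itv /= /BB eqxx /= => /andP[h1 h2].
  by apply/eqP; rewrite eq_le h1 h2.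
have hsum' : \sum_y qY P y * a y = 1 by exact: hsum.
have hS : forall x, Pst P zs = P x zs -> M <= ell x a.
  by move=> x hx; rewrite hMG; exact: GG_le.
set gmin := \big[Num.min/1]_(x | P x zs < Pst P zs) (Pst P zs - P x zs).
have gp : 0 < gmin by apply: lt_bigmin => // x hx; rewrite subr_gt0.
have gle : forall x, P x zs < Pst P zs -> gmin <= Pst P zs - P x zs.
  by move=> x hx; exact: bigmin_le_cond.
set A := \sum_y a y.
have A0 : 0 <= A by apply: sumr_ge0 => y _.
have aA : forall y, a y <= A.
  by move=> y; rewrite /A (bigD1 y) //= lerDl; apply: sumr_ge0.
have M1 : 0 < 1 + M by rewrite addr_gt0.
have A1 : 0 < 1 + A by rewrite ltr_wpDr.
exists (M * Num.min (gmin / (1 + M)) (1 / (1 + A))); split.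
  by rewrite mulr_gt0 // lt_min !divr_gt0.
move=> d /andP[d0 dt].
set t := d / M.
have t0 : 0 <= t by rewrite divr_ge0 // ltW.
have tle : t <= Num.min (gmin / (1 + M)) (1 / (1 + A)).
  by rewrite /t ler_pdivrMr // mulrC.
have tg : t * (1 + M) <= gmin.
  rewrite -ler_pdivlMr //; apply: le_trans tle _; by rewrite ge_min lexx.
have tA : t * (1 + A) <= 1.
  rewrite -ler_pdivlMr //; apply: le_trans tle _; by rewrite ge_min lexx orbT.
have hd : d = t * M by rewrite /t divfK // gt_eqF.
set v := fun y => t * a y.
have hv : forall y, 0 <= v y <= 1.
  move=> y; rewrite /v mulr_ge0 //=.
  have := aA y; have := a0 y; nra.
have vzs : v zs = 0 by rewrite /v azs mulr0.
exists (mW zs v); split; first exact: mW_channel.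
split.
  apply: (merge_PcX HP hv vzs) => x.
  have E1 : \sum_y v y * P x y = t * \sum_y a y * P x y.
    by rewrite mulr_sumr; apply: eq_bigr => y _; rewrite /v mulrA.
  have E2 : \sum_y v y * Pst P y = t * \sum_y a y * Pst P y.
    by rewrite mulr_sumr; apply: eq_bigr => y _; rewrite /v mulrA.
  have E3 : ell x a = \sum_y a y * Pst P y - \sum_y a y * P x y.
    by rewrite /ell -sumrB; apply: eq_bigr => y _; rewrite mulrBl mulrC [P x y * _]mulrC.
  have sP1 : \sum_y a y * P x y <= 1.
    rewrite -hsum'; apply: ler_sum => y _; rewrite mulrC ler_wpM2r //; exact: P_le_q.
  have sS0 : 0 <= \sum_y a y * Pst P y.
    by apply: sumr_ge0 => y _; rewrite mulr_ge0 ?Pst_ge0.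
  rewrite E1 E2 hd.
  have [hx|hx] := eqVneq (Pst P zs) (P x zs).
    have := hS x hx; rewrite E3 -hx; nra.
  have hlt' : P x zs < Pst P zs by rewrite lt_def hx P_le_Pst.
  have := gle x hlt'; nra.
apply: le_trans (merge_PcY HP vzs).
have -> : \sum_y qY P y * v y = t.
  rewrite /v (eq_bigr (fun y => t * (qY P y * a y))); last by move=> y _; rewrite mulrCA.
  by rewrite -mulr_sumr hsum' mulr1.
by rewrite /t mulrC.
Qed.
End Part1.

Lemma part1 (R : realType) (X Y : finType) (P : X -> Y -> R) :
  is_joint P -> PcX P < PcXgY P ->
  (exists epsL : R,
     PcX P < epsL < PcXgY P /\
     cvg (left_dq (hlow P) (PcXgY P) @ (PcXgY P)^'-) /\
     forall eps : R, epsL <= eps <= PcXgY P ->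
       hlow P eps = 1 - (PcXgY P - eps) * left_deriv (hlow P) (PcXgY P)).
Proof.
move=> HP hlt.
have [xs0 hxs0] := argmax_ex HP.
have [zs [a [M [qzs aD hMG Mp hglob]]]] := best HP hlt hxs0.
have [t0 [t0p hL]] := lower1 HP qzs aD hMG Mp.
have hU := upper1 HP hxs0 Mp hglob.
set t1 := Num.min t0 ((PcXgY P - PcX P) / 2).
have t1p : 0 < t1 by rewrite lt_min t0p /= divr_gt0 // subr_gt0.
have hG : forall eps, PcXgY P - t1 <= eps <= PcXgY P ->
    hlow P eps = 1 - M^-1 * (PcXgY P - eps) /\
    (forall W, is_channel W -> PcXgZ P W <= eps ->
       1 - M^-1 * (PcXgY P - eps) <= PcYgZ P W -> PcYgZ P W = hlow P eps).
  apply: gen; [by rewrite invr_ge0 ltW|exact: hU|].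
  move=> d /andP[d0 dt]; apply: hL; rewrite d0 /=; apply: le_trans dt _.
  by rewrite ge_min lexx.
have [hc hd] := der t1p (fun e he => (hG e he).1).
exists (PcXgY P - t1); split; last split.
- apply/andP; split; last by rewrite ltrBlDr ltrDl.
  have : t1 <= (PcXgY P - PcX P) / 2 by rewrite ge_min lexx orbT.
  move=> h; lra.
- by apply/cvg_ex; exists (M^-1).
- by move=> eps he; rewrite hd mulrC; exact: (hG eps he).1.
Qed.

End Cpt.

Unset Implicit Arguments.

Theorem theorem3 (R : realType) (X Y : finType) (P : X -> Y -> R) :
  is_joint P ->
  PcX P < PcXgY P ->
  (* linear part, with the left derivative at Pc(X|Y) *)
  (exists epsL : R,
     PcX P < epsL < PcXgY P /\
     cvg (left_dq (hlow P) (PcXgY P) @ (PcXgY P)^'-) /\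
     forall eps : R, epsL <= eps <= PcXgY P ->
       hlow P eps = 1 - (PcXgY P - eps) * left_deriv (hlow P) (PcXgY P))
  /\
  (* value of the left derivative, and optimality of the Z-channel *)
  (forall xs : Y -> X,
     (forall y, 0 < qY P y) ->
     (forall y x, x != xs y -> condXY P x y < condXY P (xs y) y) ->
     ((left_deriv (hlow P) (PcXgY P))%:E = min_pc_ratio P xs)%E /\
     (forall y0 z0 : Y,
        pc_ratio P xs (y0, z0) = min_pc_ratio P xs ->
        exists epsLyz : R, epsLyz < PcXgY P /\
          forall eps : R, epsLyz <= eps <= PcXgY P ->
            achieves P (zchannel y0 z0 (zeta_yz P xs y0 z0 eps)) eps)).
Proof.
move=> HP hlt; split; first exact: Cpt.part1 HP hlt.
exact: part2 HP hlt.
Qed.
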